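(* Let $(\mathbf{P},d_{\mathbf{P}})$ be a finite metric poset and let $M,N$ be $\mathbf{P}$-modules. Then \[ \mathrm{dist}_{\mathrm{B}}\bigl(P^M_\bullet,P^N_\bullet\bigr)\ \le\ d_{\mathrm{GT}}(M,N). \]
   Context: Fix a field $k$; $\mathrm{vect}$ denotes the category of finite-dimensional $k$-vector spaces. A finite poset $\mathbf{P}$ is regarded as a category with a unique morphism $x\to y$ iff $x\le y$. A $\mathbf{P}$-module is a functor $\mathbf{P}\to\mathrm{vect}$; $\mathrm{vect}^{\mathbf{P}}$ is the category of $\mathbf{P}$-modules. For a monotone map $g:\mathbf{P}\to\mathbf{Q}$, $g^*:\mathrm{vect}^{\mathbf{Q}}\to\mathrm{vect}^{\mathbf{P}}$ is precomposition $N\mapsto N\circ g$. A finite metric poset is a finite poset $\mathbf{P}$ with a metric $d_{\mathbf{P}}$ on its underlying set. Galois insertions and transport. A Galois connection $f:\mathbf{Q}\rightleftarrows\mathbf{P}:g$ consists of monotone maps $f:\mathbf{Q}\to\mathbf{P}$, $g:\mathbf{P}\to\mathbf{Q}$ with $f(u)\le x\iff u\le g(x)$ for all $u\in\mathbf{Q},x\in\mathbf{P}$; it is a Galois insertion if moreover $f\circ g=\mathrm{id}_{\mathbf{P}}$. For $M,N\in\mathrm{vect}^{\mathbf{P}}$, a Galois coupling $(\mathbf{Q},f\dashv g,h\dashv i,\Gamma)$ of $(M,N)$ consists of a finite poset $\mathbf{Q}$, two Galois insertions $f:\mathbf{Q}\rightleftarrows\mathbf{P}:g$ and $h:\mathbf{Q}\rightleftarrows\mathbf{P}:i$,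 and $\Gamma\in\mathrm{vect}^{\mathbf{Q}}$ with $g^*\Gamma\cong M$ and $i^*\Gamma\cong N$. Its cost is $\mathrm{cost}(\Gamma)=\sup_{q\in\mathbf{Q}}d_{\mathbf{P}}(f(q),h(q))$. The Galois transport distance $d_{\mathrm{GT}}(M,N)$ is the infimum of the costs of all Galois couplings of $(M,N)$, and $\infty$ if there is none. Projectives and resolutions. For $x\in\mathbf{P}$, $k[\mathbf{P}]_x$ is the $\mathbf{P}$-module with $k[\mathbf{P}]_x(y)=k$ if $x\le y$ and $0$ otherwise, all structure maps between nonzero spaces being $\mathrm{id}_k$; up to isomorphism these are exactly the indecomposable projective $\mathbf{P}$-modules and every projective $\mathbf{P}$-module is a finite direct sum of them. For $x,y\in\mathbf{P}$ with $y\le x$ let $\rho(x\ge y):k[\mathbf{P}]_x\to k[\mathbf{P}]_y$ be the morphism which is $\mathrm{id}_k$ at every $z\ge x$ (it spans the one-dimensional Hom space); set $\rho(x\ge y)=0$ if $y\not\le x$. If $E=\bigoplus_{x\in\mathrm{smd}(E)}k[\mathbf{P}]_x$ and $F=\bigoplus_{y\in\mathrm{smd}(F)}k[\mathbf{P}]_y$ are projectives given with such decompositions ($\mathrm{smd}(E)$ is the finite multiset/list of indices), every morphism $\alpha:E\to F$ is uniquely a matrix $[a_{x,y}\rho(x\ge y)]$ with $a_{x,y}\in k$ and $a_{x,y}=0$ unless $x\ge y$; $\mathrm{Mat}(\alpha):=[a_{x,y}]_{(x,y)\in\mathrm{smd}(E)\times\mathrm{smd}(F)}$. A projective resolution of $M$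 is a complex $E_\bullet=(E_i,\partial^E_i:E_{i+1}\to E_i)_{i\ge0}$ of projective $\mathbf{P}$-modules with an augmentation $E_0\to M$ making $\cdots\to E_1\to E_0\to M\to0$ exact; each $E_i$ is considered with a fixed decomposition into indecomposable projectives, $|E_i|$ is the number of summands. $P^M_\bullet$ denotes a minimal projective resolution of $M$. $\mathsf{Res}(P^M_\bullet,P^N_\bullet)$ is the set of pairs $(E_\bullet,F_\bullet)$ where $E_\bullet$ is a projective resolution of $M$ and $F_\bullet$ one of $N$ with $|E_i|=|F_i|$ for all $i$. A matching of $(E_\bullet,F_\bullet)$ is a family $B=(B_i)_{i\ge0}$ of bijections $B_i:\mathrm{smd}(E_i)\to\mathrm{smd}(F_i)$ (of indexed multisets) such that for all $i\ge0$, $x\in\mathrm{smd}(E_i)$, $x'\in\mathrm{smd}(E_{i+1})$, the $(x',x)$-entry of $\mathrm{Mat}(\partial^E_i)$ equals the $(B_{i+1}(x'),B_i(x))$-entry of $\mathrm{Mat}(\partial^F_i)$. Its cost is $\mathrm{cost}(B)=\sup\{d_{\mathbf{P}}(x,B_i(x))\mid i\ge0,x\in\mathrm{smd}(E_i)\}$. $\mathrm{dist}_{\mathrm{R}}(E_\bullet,F_\bullet)$ is the infimum of costs over matchings ($\infty$ if none), and $\mathrm{dist}_{\mathrm{B}}(P^M_\bullet,P^N_\bullet):=\inf_{(E_\bullet,F_\bullet)\in\mathsf{Res}(P^M_\bullet,P^N_\bullet)}\mathrm{dist}_{\mathrm{R}}(E_\bullet,F_\bullet)$, which is $\infty$ if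 that set is empty. *)

(* Defs.v *)
From HB Require Import structures.
From mathcomp Require Import all_boot all_order all_algebra.
From mathcomp Require Import boolp classical_sets reals constructive_ereal ereal.

Set Implicit Arguments.
Unset Strict Implicit.
Unset Printing Implicit Defensive.

Import Order.TTheory GRing.Theory Num.Theory.
Local Open Scope classical_set_scope.
Local Open Scope ring_scope.

(** A finite-dimensional k-vector space is k^n (row vectors); a linear map
    k^m -> k^n is a matrix A : 'M_(m,n) acting by v |-> v *m A.            *)

Section Modules.
Variable F : fieldType.

Record pmod (d : Order.disp_t) (P : finPOrderType d) := PMod {
  dimv : P -> nat;
  rmap : forall x y : P, 'M[F]_(dimv x, dimv y)   (* meaningful for x <= y *)
}.
Arguments dimv {d P} _ _.
Arguments rmap {d P} _ _ _.

Definition functorial d (P : finPOrderType d) (M : pmod P) : Prop :=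
  (forall x : P, rmap M x x = 1%:M) /\
  (forall x y z : P, (x <= y)%O -> (y <= z)%O ->
     rmap M x z = rmap M x y *m rmap M y z).

Definition natural d (P : finPOrderType d) (M N : pmod P)
  (phi : forall x : P, 'M[F]_(dimv M x, dimv N x)) : Prop :=
  forall x y : P, (x <= y)%O -> phi x *m rmap N x y = rmap M x y *m phi y.

Definition mod_iso d (P : finPOrderType d) (M N : pmod P) : Prop :=
  exists (phi : forall x : P, 'M[F]_(dimv M x, dimv N x))
         (psi : forall x : P, 'M[F]_(dimv N x, dimv M x)),
    [/\ natural phi, natural psi,
        (forall x, phi x *m psi x = 1%:M) & (forall x, psi x *m phi x = 1%:M)].

Definition pullback d d' (P : finPOrderType d) (Q : finPOrderType d')
  (g : P -> Q) (N : pmod Q) : pmod P :=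
  @PMod d P (fun x => dimv N (g x)) (fun x y => rmap N (g x) (g y)).

(** * Projective modules  E = (+)_{j < n} k[P]_{lab j}.
    E(z) has basis the j with lab j <= z; the structure maps are the
    coordinate inclusions (identity on each summand).                    *)

Definition supp d (P : finPOrderType d) n (lab : 'I_n -> P) (z : P)
  : {set 'I_n} := [set j | (lab j <= z)%O].

Definition projmod d (P : finPOrderType d) n (lab : 'I_n -> P) : pmod P :=
  @PMod d P (fun z => #|supp lab z|)
    (fun z w => \matrix_(a, b)
        ((enum_val a == enum_val b :> 'I_n)%:R : F)).

(* the morphism (+)_j k[P]_{lt j} -> (+)_k k[P]_{ls k} with matrix
   [A j k * rho(lt j >= ls k)] *)
Definition projmap d (P : finPOrderType d) m n (lt : 'I_m -> P) (ls : 'I_n -> P)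
  (A : 'M[F]_(m, n)) (z : P) :
  'M[F]_(dimv (projmod lt) z, dimv (projmod ls) z) :=
  \matrix_(a, b) A (enum_val a) (enum_val b).

(* a coefficient matrix defines a morphism iff a_{x,y} = 0 unless x >= y *)
Definition admissible d (P : finPOrderType d) m n (lt : 'I_m -> P)
  (ls : 'I_n -> P) (A : 'M[F]_(m, n)) : Prop :=
  forall j k, ~~ (ls k <= lt j)%O -> A j k = 0.

(** * Projective resolutions with fixed decompositions.
    E_i = (+)_{j < len i} k[P]_{lab i j}, differential
    d_i : E_{i+1} -> E_i with matrix Mat(d_i) = dif i, augmentation
    aug : E_0 -> M.                                                     *)
Record presol d (P : finPOrderType d) := PRes {
  len : nat -> nat;
  lab : forall i, 'I_(len i) -> P;
  dif : forall i, 'M[F]_(len i.+1, len i)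
}.
Arguments len {d P} _ _.
Arguments lab {d P} _ _ _.
Arguments dif {d P} _ _.

Definition exact_at m n p (A : 'M[F]_(m, n)) (B : 'M[F]_(n, p)) : Prop :=
  (A == kermx B)%MS.

Definition is_resolution d (P : finPOrderType d) (M : pmod P) (E : presol P) : Prop :=
  (forall i, admissible (lab E i.+1) (lab E i) (dif E i)) /\
  exists aug : forall z : P, 'M[F]_(dimv (projmod (lab E 0)) z, dimv M z),
    [/\ natural aug,
        (forall z, row_full (aug z)),
        (forall z, exact_at (projmap (lab E 1) (lab E 0) (dif E 0) z) (aug z)) &
        (forall i z, exact_at (projmap (lab E i.+2) (lab E i.+1) (dif E i.+1) z)
                              (projmap (lab E i.+1) (lab E i) (dif E i) z))].

End Modules.
Arguments dimv {F d P} _ _.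
Arguments rmap {F d P} _ _ _.
Arguments len {F d P} _ _.
Arguments lab {F d P} _ _ _.
Arguments dif {F d P} _ _.

Section Distances.
Variable F : fieldType.
Variable R : realType.
Local Open Scope ereal_scope.

Definition is_metric (T : Type) (dist : T -> T -> R) : Prop :=
  (forall x y, (0 <= dist x y)%R) /\
  (forall x y, dist x y = 0%R <-> x = y) /\
  (forall x y, dist x y = dist y x) /\
  (forall x y z, (dist x z <= dist x y + dist y z)%R).

(* supremum of a family of nonnegative distances (sup of the empty family = 0) *)
Definition nnsup (S : set R) : \bar R := ereal_sup ([set 0] `|` (EFin @` S)).

Definition is_matching d (P : finPOrderType d) (E G : presol F P)
  (B : forall i, 'I_(len E i) -> 'I_(len G i)) : Prop :=
  (forall i, bijective (B i)) /\
  (forall i (x' : 'I_(len E i.+1)) (x : 'I_(len E i)),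
      dif E i x' x = dif G i (B i.+1 x') (B i x)).

Definition matching_cost d (P : finPOrderType d) (dP : P -> P -> R)
  (E G : presol F P) (B : forall i, 'I_(len E i) -> 'I_(len G i)) : \bar R :=
  nnsup [set r | exists i (x : 'I_(len E i)), r = dP (lab E i x) (lab G i (B i x))].

Definition dist_R d (P : finPOrderType d) (dP : P -> P -> R) (E G : presol F P)
  : \bar R :=
  ereal_inf [set c | exists B : forall i, 'I_(len E i) -> 'I_(len G i), is_matching B /\ c = matching_cost dP B].

Definition dist_B d (P : finPOrderType d) (dP : P -> P -> R) (M N : pmod F P)
  : \bar R :=
  ereal_inf [set c | exists (E G : presol F P),
     [/\ is_resolution M E, is_resolution N G,
         (forall i, len E i = len G i) & c = dist_R dP E G]].

Definition galois_insertion d d' (P : finPOrderType d) (Q : finPOrderType d')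
  (f : Q -> P) (g : P -> Q) : Prop :=
  [/\ {homo f : u v / (u <= v)%O}, {homo g : x y / (x <= y)%O},
      (forall (u : Q) (x : P), (f u <= x)%O = (u <= g x)%O) &
      (forall x : P, f (g x) = x)].

Definition galois_coupling d (P : finPOrderType d) (M N : pmod F P)
  d' (Q : finPOrderType d') (f : Q -> P) (g : P -> Q) (h : Q -> P) (i : P -> Q)
  (Gam : pmod F Q) : Prop :=
  [/\ galois_insertion f g, galois_insertion h i, functorial Gam,
      mod_iso (pullback g Gam) M & mod_iso (pullback i Gam) N].

Definition coupling_cost d (P : finPOrderType d) (dP : P -> P -> R)
  d' (Q : finPOrderType d') (f h : Q -> P) : \bar R :=
  nnsup [set r | exists q : Q, r = dP (f q) (h q)].

Definition d_GT d (P : finPOrderType d) (dP : P -> P -> R) (M N : pmod F P)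
  : \bar R :=
  ereal_inf [set c | exists (d' : Order.disp_t) (Q : finPOrderType d')
     (f : Q -> P) (g : P -> Q) (h : Q -> P) (i : P -> Q) (Gam : pmod F Q),
     galois_coupling M N f g h i Gam /\ c = coupling_cost dP f h].

End Distances.

(* Main.v *)
Require Import Defs.
From HB Require Import structures.
From mathcomp Require Import all_boot all_order all_algebra.
From mathcomp Require Import boolp classical_sets reals constructive_ereal ereal.
Import Defs.

Import Order.TTheory GRing.Theory Num.Theory.
Local Open Scope ring_scope.

Section Sel.
Context {F : fieldType}.

Definition sel n (S : {set 'I_n}) : 'M[F]_(#|S|, n) :=
  \matrix_(a, j) (enum_val a == j)%:R.
Arguments sel {n} S.

Lemma row_sel {n} (S : {set 'I_n}) a : row a (sel S) = delta_mx 0 (enum_val a).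
Proof. by apply/rowP => j; rewrite !mxE eqxx /= eq_sym. Qed.

Lemma row_selM {n} (S : {set 'I_n}) {p} (B : 'M[F]_(n, p)) a :
  row a (sel S *m B) = row (enum_val a) B.
Proof. by rewrite row_mul row_sel -rowE. Qed.

Lemma selM_entry {n} (S : {set 'I_n}) {p} (B : 'M[F]_(n, p)) a k :
  (sel S *m B) a k = B (enum_val a) k.
Proof. by have /rowP/(_ k) := row_selM S B a; rewrite !mxE. Qed.

Lemma selT_entry {n} (S : {set 'I_n}) {p} (B : 'M[F]_(p, n)) a b :
  (B *m (sel S)^T) a b = B a (enum_val b).
Proof.
rewrite !mxE (bigD1 (enum_val b)) //= !mxE eqxx mulr1 big1 ?addr0 // => j /negbTE nj.
by rewrite !mxE eq_sym nj mulr0.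
Qed.

Lemma sel_selT {n} (S : {set 'I_n}) : sel S *m (sel S)^T = 1%:M.
Proof.
apply/matrixP => a b; rewrite selT_entry !mxE.
by rewrite (inj_eq enum_val_inj).
Qed.

Lemma sel_sub {n} {S S' : {set 'I_n}} : S \subset S' ->
  sel S *m (sel S')^T *m sel S' = sel S.
Proof.
move=> sub; apply/row_matrixP => a.
have Ha : enum_val a \in S' := fintype.subsetP sub _ (enum_valP a).
set b := enum_rank_in Ha (enum_val a).
have eb : enum_val b = enum_val a by rewrite /b enum_rankK_in.
rewrite -!mulmxA row_mul row_sel -eb -row_sel -row_mul !mulmxA sel_selT mul1mx.
by [].
Qed.

Lemma sub_sel_fix {n m} {S : {set 'I_n}} {B : 'M[F]_(m, n)} :
  (B <= sel S)%MS -> B *m (sel S)^T *m sel S = B.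
Proof. by case/submxP => X ->; rewrite -!mulmxA (mulmxA (sel S)) sel_selT mul1mx. Qed.

Lemma sel_subset {n} {S S' : {set 'I_n}} : S \subset S' -> (sel S <= sel S')%MS.
Proof. by move=> sub; rewrite -(sel_sub sub) submxMl. Qed.

Lemma row_in_sel {n} (S : {set 'I_n}) {p} (B : 'M[F]_(n, p)) j :
  j \in S -> (row j B <= sel S *m B)%MS.
Proof.
move=> Hj; rewrite -(enum_rankK_in Hj Hj) -row_selM; exact: row_sub.
Qed.

Lemma sel_entry0 {n} (S : {set 'I_n}) (v : 'rV[F]_n) j :
  (v <= sel S)%MS -> j \notin S -> v 0 j = 0.
Proof.
case/submxP => X -> Hj; rewrite mxE big1 // => a _; rewrite mxE.
case: eqP => [e|]; last by rewrite mulr0.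
by move: (enum_valP a); rewrite e (negbTE Hj).
Qed.

End Sel.
Arguments sel F {n} S.

Section Stages.
Variable F : fieldType.
Variables (d : Order.disp_t) (T : finPOrderType d).

Lemma projmod_sel {n} (lab : 'I_n -> T) z w :
  rmap (projmod F lab) z w = sel F (supp lab z) *m (sel F (supp lab w))^T.
Proof. by apply/matrixP => a b; rewrite selT_entry !mxE. Qed.

Lemma projmap_sel {m n} (lt : 'I_m -> T) (ls : 'I_n -> T) (A : 'M[F]_(m, n)) z :
  projmap lt ls A z = sel F (supp lt z) *m A *m (sel F (supp ls z))^T.
Proof. by apply/matrixP => a b; rewrite selT_entry selM_entry !mxE. Qed.

Lemma supp_le {n} (lab : 'I_n -> T) {x z} : (x <= z)%O -> supp lab x \subset supp lab z.
Proof.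
move=> le; apply/fintype.subsetP => j; rewrite !inE => h; exact: le_trans h le.
Qed.

Record stage := Stage {
  sn : nat; slab : 'I_sn -> T; sD : T -> nat;
  sphi : forall z, 'M[F]_(#|supp slab z|, sD z);
  srho : forall x z : T, 'M[F]_(sD x, sD z) }.

Definition SS (s : stage) z := supp (slab s) z.

Definition gens (s : stage) := {x : T & 'I_#|SS s x|}.

Lemma nsz_ex (s : stage) : {n : nat | n = #|{: gens s}|}.
Proof. by exists #|{: gens s}|. Qed.
Definition nsz s := proj1_sig (nsz_ex s).
Definition eqs s : nsz s = #|{: gens s}| := proj2_sig (nsz_ex s).
Definition gval s (k : 'I_(nsz s)) : gens s := enum_val (cast_ord (eqs s) k).
Definition gidx s (e : gens s) : 'I_(nsz s) := cast_ord (esym (eqs s)) (enum_rank e).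
Lemma gidxK s e : gval s (gidx s e) = e.
Proof. by rewrite /gval /gidx cast_ordKV enum_rankK. Qed.

Definition glab (s : stage) (k : 'I_(nsz s)) : T := tag (gval s k).

Definition gcoef (s : stage) : 'M[F]_(nsz s, sn s) :=
  \matrix_(k, j) (kermx (sphi s (tag (gval s k))) *m sel F (SS s (tag (gval s k))))
     (tagged (gval s k)) j.

Definition next (s : stage) : stage :=
  @Stage (nsz s) (glab s) (fun z => #|SS s z|)
    (fun z => sel F (supp (glab s) z) *m gcoef s *m (sel F (SS s z))^T)
    (fun x z => sel F (SS s x) *m (sel F (SS s z))^T).

Definition natural_stage (s : stage) := forall x z, (x <= z)%O ->
  sel F (SS s x) *m (sel F (SS s z))^T *m sphi s z = sphi s x *m srho s x z.

Lemma row_gcoef s k :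
  row k (gcoef s) = row (tagged (gval s k))
     (kermx (sphi s (tag (gval s k))) *m sel F (SS s (tag (gval s k)))).
Proof. by apply/rowP => j; rewrite !mxE. Qed.

Lemma gcoef_sub s k : (row k (gcoef s) <= sel F (SS s (glab s k)))%MS.
Proof. by rewrite row_gcoef row_mul submxMl. Qed.

Lemma gcoef_adm s k j : ~~ (slab s j <= glab s k)%O -> gcoef s k j = 0.
Proof.
move=> h; have := @sel_entry0 F _ _ _ j (gcoef_sub s k).
by rewrite !mxE inE; apply.
Qed.

Lemma selg_sub s x : (sel F (supp (glab s) x) *m gcoef s <= sel F (SS s x))%MS.
Proof.
apply/row_subP => a; rewrite row_selM.
apply: submx_trans (gcoef_sub s _) _; apply: sel_subset.
apply: supp_le; have := enum_valP a; by rewrite inE.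
Qed.

Lemma next_natural s : natural_stage (next s).
Proof.
move=> x z le /=.
rewrite /SS /= !mulmxA (sel_sub (supp_le (glab s) le)).
by rewrite (sub_sel_fix (selg_sub s x)).
Qed.

Lemma next_exact s : natural_stage s ->
  forall z, (sphi (next s) z == kermx (sphi s z))%MS.
Proof.
move=> nat z.
have C : (sel F (supp (glab s) z) *m gcoef s == kermx (sphi s z) *m sel F (SS s z))%MS.
  apply/andP; split.
  - apply/row_subP => a; rewrite row_selM row_gcoef.
    set e := gval s (enum_val a).
    have le : (tag e <= z)%O by have := enum_valP a; rewrite inE.
    set v := row (tagged e) (kermx (sphi s (tag e))).
    have v0 : v *m sphi s (tag e) = 0 by rewrite /v -row_mul mulmx_ker row0.
    set w := v *m sel F (SS s (tag e)) *m (sel F (SS s z))^T.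
    have : (w <= kermx (sphi s z))%MS.
      apply/sub_kermxP; rewrite /w -!mulmxA (mulmxA (sel F _)) nat //.
      by rewrite mulmxA v0 mul0mx.
    move/(submxMr (sel F (SS s z))).
    have -> : w *m sel F (SS s z) = v *m sel F (SS s (tag e)).
      by rewrite /w -!mulmxA (mulmxA (sel F (SS s (tag e)))) (sel_sub (supp_le (slab s) le)).
    by rewrite /v -row_mul.
  - apply/row_subP => r.
    pose e : gens s := existT _ z r.
    have Hin : gidx s e \in supp (glab s) z by rewrite inE /glab gidxK.
    apply: submx_trans _ (row_in_sel _ _ _ Hin).
    by rewrite row_gcoef gidxK; exact: submx_refl.
rewrite /=.
have -> : kermx (sphi s z) = kermx (sphi s z) *m sel F (SS s z) *m (sel F (SS s z))^T.
  by rewrite -mulmxA sel_selT mulmx1.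
by case/andP: C => C1 C2; apply/andP; split; apply: submxMr.
Qed.

Variable Gam : pmod F T.
Hypothesis HG : functorial Gam.

Definition gens0 := {x : T & 'I_(dimv Gam x)}.
Lemma n0_ex : {n : nat | n = #|{: gens0}|}.
Proof. by exists #|{: gens0}|. Qed.
Definition n0 := proj1_sig n0_ex.
Definition eq0 : n0 = #|{: gens0}| := proj2_sig n0_ex.
Definition gval0 (k : 'I_n0) : gens0 := enum_val (cast_ord eq0 k).
Definition gidx0 (e : gens0) : 'I_n0 := cast_ord (esym eq0) (enum_rank e).
Lemma gidx0K e : gval0 (gidx0 e) = e.
Proof. by rewrite /gval0 /gidx0 cast_ordKV enum_rankK. Qed.
Definition lab0 (k : 'I_n0) : T := tag (gval0 k).
Definition B0 z : 'M[F]_(n0, dimv Gam z) :=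
  \matrix_(k, c) rmap Gam (tag (gval0 k)) z (tagged (gval0 k)) c.

Definition stage0 : stage :=
  @Stage n0 lab0 (dimv Gam) (fun z => sel F (supp lab0 z) *m B0 z) (rmap Gam).

Lemma row_B0 k z : row k (B0 z) = row (tagged (gval0 k)) (rmap Gam (tag (gval0 k)) z).
Proof. by apply/rowP => j; rewrite !mxE. Qed.

Lemma stage0_natural : natural_stage stage0.
Proof.
move=> x z le /=; rewrite /SS /= mulmxA (sel_sub (supp_le lab0 le)).
apply/row_matrixP => a; rewrite [RHS]row_mul !row_selM !row_B0.
have le' : (lab0 (enum_val a) <= x)%O by have := enum_valP a; rewrite inE.
by case: HG => _ H; rewrite (H _ x) // row_mul.
Qed.

Lemma stage0_full z : row_full (sel F (supp lab0 z) *m B0 z).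
Proof.
rewrite -sub1mx; apply/row_subP => r.
pose e : gens0 := existT _ z r.
have Hin : gidx0 e \in supp lab0 z by rewrite inE /lab0 gidx0K.
apply: submx_trans _ (row_in_sel _ _ _ Hin).
by rewrite row_B0 gidx0K /=; case: HG => ->.
Qed.

Definition st i := iter i next stage0.

Lemma st_natural i : natural_stage (st i).
Proof. case: i => [|i]; [exact: stage0_natural | exact: next_natural]. Qed.

Lemma sphi_next s z : sphi (next s) z = sel F (supp (glab s) z) *m gcoef s *m (sel F (SS s z))^T.
Proof. by []. Qed.

Lemma sphi_stage0 z : sphi stage0 z = sel F (supp lab0 z) *m B0 z.
Proof. by []. Qed.

Lemma st_exact1 i z : (sphi (st i.+2) z == kermx (sphi (st i.+1) z))%MS.
Proof. exact: (next_exact (st i.+1) (st_natural i.+1) z). Qed.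

Lemma st0_exact1 z : (sphi (st 1) z == kermx (sphi stage0 z))%MS.
Proof. exact: (next_exact stage0 stage0_natural z). Qed.

Lemma st_exact i z :
  (sel F (supp (slab (st i.+2)) z) *m gcoef (st i.+1) *m (sel F (supp (slab (st i.+1)) z))^T
   == kermx (sel F (supp (slab (st i.+1)) z) *m gcoef (st i) *m (sel F (supp (slab (st i)) z))^T))%MS.
Proof.
have h := st_exact1 i z.
rewrite (sphi_next (st i.+1) z) (sphi_next (st i) z) in h.
exact h.
Qed.

Lemma st0_exact z :
  (sel F (supp (slab (st 1)) z) *m gcoef (st 0) *m (sel F (supp (slab (st 0)) z))^T
   == kermx (sel F (supp lab0 z) *m B0 z))%MS.
Proof.
have h := st0_exact1 z.
rewrite (sphi_next stage0 z) sphi_stage0 in h.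
exact h.
Qed.

End Stages.

Arguments st {F d T} Gam i.
Arguments sn {F d T} s.
Arguments slab {F d T} s _.
Arguments sphi {F d T} s z.
Arguments srho {F d T} s x z.
Arguments SS {F d T} s z.
Arguments next {F d T} s.
Arguments glab {F d T} s k.
Arguments stage0_natural {F d T Gam} HG.
Arguments stage0_full {F d T Gam} HG z.
Arguments st_natural {F d T Gam} HG i.
Arguments st_exact {F d T Gam} HG i z.
Arguments st0_exact {F d T Gam} HG z.
Arguments next_exact {F d T s} _ z.
Arguments gcoef_adm {F d T s k j} _.
Arguments projmod_sel {F d T n} lab z w.
Arguments projmap_sel {F d T m n} lt ls A z.
Arguments gcoef {F d T} s.
Arguments B0 {F d T} Gam z.
Arguments stage0 {F d T} Gam.

Lemma kermx_inv (F : fieldType) m n p (A : 'M[F]_(m, n)) (B : 'M[F]_(n, p)) (C : 'M[F]_(p, n)) :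
  B *m C = 1%:M -> (kermx (A *m B) == kermx A)%MS.
Proof.
move=> BC; apply/andP; split; apply/sub_kermxP.
- by rewrite -(mulmx1 (kermx (A *m B) *m A)) -BC mulmxA -(mulmxA _ A B) mulmx_ker mul0mx.
- by rewrite mulmxA mulmx_ker mul0mx.
Qed.

Lemma eqmx_trans_b {F : fieldType} {m1 m2 m3 n} {A : 'M[F]_(m1, n)} {B : 'M[F]_(m2, n)} {C : 'M[F]_(m3, n)} :
  (A == B)%MS -> (B == C)%MS -> (A == C)%MS.
Proof.
case/andP => h1 h2 /andP [h3 h4]; by rewrite /= (submx_trans h1 h3) (submx_trans h4 h2).
Qed.

Lemma eqmx_sym_b {F : fieldType} {m1 m2 n} {A : 'M[F]_(m1, n)} {B : 'M[F]_(m2, n)} :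
  (A == B)%MS -> (B == A)%MS.
Proof. by case/andP => h1 h2; apply/andP. Qed.

Section Transport.
Variable F : fieldType.
Variables (d d' : Order.disp_t) (P : finPOrderType d) (Q : finPOrderType d').
Variables (f : Q -> P) (g : P -> Q) (Gam : pmod F Q) (M : pmod F P).
Hypothesis Hgi : galois_insertion f g.
Hypothesis HG : functorial Gam.
Hypothesis iso : mod_iso (pullback g Gam) M.

Definition Pres : presol F P :=
  @PRes F d P (fun i => sn (st Gam i)) (fun i j => f (slab (st Gam i) j))
     (fun i => gcoef (st Gam i)).

Lemma supp_gal n (lb : 'I_n -> Q) z : supp (fun j => f (lb j)) z = supp lb (g z).
Proof. case: Hgi => _ _ adj _; by apply/setP => j; rewrite !inE adj. Qed.

Lemma rf_gal n (lb : 'I_n -> Q) p (X : 'M[F]_(n, p)) q (Y : 'M[F]_(p, q)) z :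
  row_full (sel F (supp lb (g z)) *m X *m Y) ->
  row_full (sel F (supp (fun j => f (lb j)) z) *m X *m Y).
Proof. by rewrite supp_gal. Qed.

Lemma ex_gal n1 n2 n3 (l1 : 'I_n1 -> Q) (l2 : 'I_n2 -> Q) (l3 : 'I_n3 -> Q)
  (A1 : 'M[F]_(n1, n2)) (A2 : 'M[F]_(n2, n3)) z :
  exact_at (sel F (supp l1 (g z)) *m A1 *m (sel F (supp l2 (g z)))^T)
           (sel F (supp l2 (g z)) *m A2 *m (sel F (supp l3 (g z)))^T) ->
  exact_at (sel F (supp (fun j => f (l1 j)) z) *m A1 *m (sel F (supp (fun j => f (l2 j)) z))^T)
           (sel F (supp (fun j => f (l2 j)) z) *m A2 *m (sel F (supp (fun j => f (l3 j)) z))^T).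
Proof. by rewrite !supp_gal. Qed.

Lemma ex0_gal n1 n2 (l1 : 'I_n1 -> Q) (l2 : 'I_n2 -> Q)
  (A1 : 'M[F]_(n1, n2)) p (X : 'M[F]_(n2, p)) q (Y : 'M[F]_(p, q)) z :
  exact_at (sel F (supp l1 (g z)) *m A1 *m (sel F (supp l2 (g z)))^T)
           (sel F (supp l2 (g z)) *m X *m Y) ->
  exact_at (sel F (supp (fun j => f (l1 j)) z) *m A1 *m (sel F (supp (fun j => f (l2 j)) z))^T)
           (sel F (supp (fun j => f (l2 j)) z) *m X *m Y).
Proof. by rewrite !supp_gal. Qed.

Lemma Pres_res : is_resolution M Pres.
Proof.
case: Hgi => fmono gmono adj fg.
split.
  move=> i j k h; apply: gcoef_adm; apply: contra h; exact: fmono.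
case: iso => phi [psi [nphi npsi e1 e2]].
exists (fun z => sel F (supp (lab Pres 0) z) *m B0 Gam (g z) *m phi z).
split.
- move=> x y le; rewrite projmod_sel /= !supp_gal.
  rewrite -!mulmxA nphi // !mulmxA.
  have N0 := stage0_natural HG _ _ (gmono _ _ le).
  congr (_ *m phi y). rewrite -[RHS]mulmxA.
  change (sel F (supp (lab0 F d' Q Gam) (g x)) *m (sel F (supp (lab0 F d' Q Gam) (g y)))^T *m
     (sel F (supp (lab0 F d' Q Gam) (g y)) *m B0 Gam (g y)) =
     sel F (supp (lab0 F d' Q Gam) (g x)) *m B0 Gam (g x) *m rmap Gam (g x) (g y)) in N0.
  change (rmap (pullback g Gam) x y) with (rmap Gam (g x) (g y)).
  by rewrite N0.
- move=> z; apply: rf_gal.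
  have h0 := stage0_full HG (g z).
  change (row_full (sel F (supp (lab0 F d' Q Gam) (g z)) *m B0 Gam (g z) *m phi z)).
  rewrite -sub1mx in h0; rewrite -sub1mx.
  have h1 : (1%:M <= phi z)%MS by rewrite -e2 submxMl.
  have h2 := submxMr (phi z) h0; rewrite mul1mx in h2.
  exact: submx_trans h1 h2.
- move=> z; rewrite projmap_sel. apply: ex0_gal.
  change (exact_at (sel F (supp (slab (st Gam 1)) (g z)) *m gcoef (st Gam 0) *m (sel F (supp (slab (st Gam 0)) (g z)))^T) (sel F (supp (lab0 F d' Q Gam) (g z)) *m B0 Gam (g z) *m phi z)).
  have E1 := st0_exact HG (g z).
  have E2 := kermx_inv F _ _ _ (sel F (supp (lab0 F d' Q Gam) (g z)) *m B0 Gam (g z)) _ _ (e1 z).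
  exact: eqmx_trans_b E1 (eqmx_sym_b E2).
- move=> i z; rewrite !projmap_sel; apply: ex_gal.
  change (exact_at (sel F (supp (slab (st Gam i.+2)) (g z)) *m gcoef (st Gam i.+1) *m (sel F (supp (slab (st Gam i.+1)) (g z)))^T)
    (sel F (supp (slab (st Gam i.+1)) (g z)) *m gcoef (st Gam i) *m (sel F (supp (slab (st Gam i)) (g z)))^T)).
  exact: (st_exact HG i (g z)).
Qed.
End Transport.


Local Close Scope ring_scope.

Theorem theorem5p2 (F : fieldType) (R : realType)
  (d : Order.disp_t) (P : finPOrderType d) (dP : P -> P -> R)
  (dP_metric : is_metric dP) (M N : pmod F P)
  (HM : functorial M) (HN : functorial N) :
  (dist_B dP M N <= d_GT dP M N)%E.
Proof.
rewrite /d_GT; apply: le_ereal_inf_tmp => c [d' [Q [f [g [h [i [Gam [[Gf Gi HG isoM isoN] ->]]]]]]]].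
set E := Pres F d d' P Q f Gam; set G := Pres F d d' P Q h Gam.
apply: (@le_trans _ _ (dist_R dP E G)).
  apply: ereal_inf_lbound; exists E, G; split => //.
  - exact: Pres_res Gf HG isoM.
  - exact: Pres_res Gi HG isoN.
pose B := (fun n (x : 'I_(len E n)) => (x : 'I_(len G n))).
apply: (@le_trans _ _ (matching_cost dP B)).
  apply: ereal_inf_lbound; exists B; split => //; split => // n.
  by exists id.
apply: le_ereal_sup => x [-> | [r [n [j ->]] <-]]; first by left.
right; exists (dP (f (slab (st Gam n) j)) (h (slab (st Gam n) j))) => //.
by exists (slab (st Gam n) j).
Qed.
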